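(* Let $b\ge2$ be an integer and let $w=d_1\dots d_p$ be a fixed block of $b$-ary digits with $p\ge1$. Let $v=d_2\dots d_p$. Then $M_w(v,k)=Z_w(v,k)(b^{-1})$, the total mass $\sum b^{-|X|}$ of the strings $X$ with prefix $v$ and exactly $k$ occurrences of $w$, is finite and has the same value for every $k\ge0$.
   Context: Strings are finite sequences over $\{0,\dots,b-1\}$. $|X|$ is the length of $X$. Occurrences of $w$ are counted possibly overlapping. $Z_w(v,k)=\sum_l c_l t^l$, where $c_l$ is the number of strings of length $l$ with prefix $v$ containing exactly $k$ occurrences of $w$. *)

(* Defs.v *)
From HB Require Import structures.
From mathcomp Require Import all_boot all_order all_algebra.
From mathcomp Require Import all_classical all_reals all_analysis.
Set Implicit Arguments. Unset Strict Implicit. Unset Printing Implicit Defensive.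

Definition occurrences (b : nat) (w X : seq 'I_b) : nat :=
  count (fun i => take (size w) (drop i X) == w) (iota 0 (size X)).

(* c_l : number of strings of length l with prefix v and exactly k
   occurrences of w  (the l-th coefficient of Z_w(v,k)). *)
Definition Zcoef (b : nat) (w v : seq 'I_b) (k l : nat) : nat :=
  #|[set X : l.-tuple 'I_b | prefix v X && (occurrences w X == k)]|.

(* Main.v *)
Require Import Defs.
From HB Require Import structures.
From mathcomp Require Import all_boot all_order all_algebra.
From mathcomp Require Import all_classical all_reals all_analysis.
From mathcomp Require Import zify.
Import Order.TTheory GRing.Theory Num.Theory.
Import numFieldNormedType.Exports.

Section Comb.
Variables (b : nat) (d1 : 'I_b) (v : seq 'I_b).
Local Notation w := (d1 :: v).
Local Notation occ := (occurrences w).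

Lemma occ_nil : occ [::] = 0%N.
Proof. by []. Qed.

Lemma occ_cons x X : occ (x :: X) = (prefix w (x :: X) + occ X)%N.
Proof.
rewrite /occurrences [prefix _ _]prefixE /=; congr (_ + _)%N.
by rewrite -[1%N]addn0 iotaDl count_map; apply: eq_count => i.
Qed.

Lemma prefix_size (s t : seq 'I_b) : prefix s t -> (size s <= size t)%N.
Proof. by move/prefixP => [t' ->]; rewrite size_cat leq_addr. Qed.

Lemma occ_short X : (size X < size w)%N -> occ X = 0%N.
Proof.
elim: X => [//|x X IH] /= H; rewrite occ_cons IH; last by apply: ltnW.
case: (boolP (prefix _ _)) => // /prefix_size /=; lia.
Qed.

Lemma prefix_long (s S Z : seq 'I_b) : (size s <= size S)%N ->
  prefix s (S ++ Z) = prefix s S.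
Proof. by move=> H; rewrite !prefixE takel_cat. Qed.

Lemma occ_catge S T : (occ S + occ T <= occ (S ++ T))%N.
Proof.
elim: S => [//|x S IH] /=; rewrite !occ_cons -addnA leq_add //.
case: (boolP (prefix w (x :: S))) => // H.
by rewrite (prefix_catl T H).
Qed.

Lemma occ_catl S T : (occ S <= occ (S ++ T))%N.
Proof. exact: leq_trans (leq_addr _ _) (occ_catge S T). Qed.

Lemma occ_L1 A Z : occ (A ++ w ++ Z) = (occ (A ++ w) + occ (v ++ Z))%N.
Proof.
elim: A => [|a A IH] /=.
  rewrite !occ_cons prefix_prefix prefix_refl (occ_short v) //.
rewrite !occ_cons IH addnA; congr (_ + _ + _)%N.
rewrite (catA A w Z) -cat_cons prefix_long //=.
by rewrite size_cat /=; lia.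
Qed.

Lemma occ_decomp X : (0 < occ X)%N ->
  exists A Z, X = A ++ w ++ Z /\ occ (A ++ w) = 1%N.
Proof.
elim: X => [//|x X IH].
rewrite occ_cons; case: (boolP (prefix w (x :: X))) => H /=.
  move=> _; move/prefixP: H => [Z ->]; exists [::], Z; split => //.
  by rewrite /= occ_cons prefix_refl (occ_short v).
rewrite add0n => /IH [A [Z [EX HA]]]; exists (x :: A), Z; split; first by rewrite EX.
rewrite occ_cons HA.
suff -> : prefix w (x :: A ++ w) = false by [].
apply/negP => H'; move/negP: H; apply.
rewrite EX -cat_cons catA; exact: prefix_catl.
Qed.

Lemma occ_uniq A T Z Z' : occ (A ++ w) = 1%N -> A ++ w ++ Z = T ++ w ++ Z' ->
  (size A <= size T)%N.
Proof.
move=> HA E; rewrite leqNgt; apply/negP => HT.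
have eT : take (size T) A = T.
  have := congr1 (take (size T)) E.
  by rewrite takel_cat ?(ltnW HT) // take_size_cat.
set B := drop (size T) A.
have eA : A = T ++ B by rewrite /B -{1}(cat_take_drop (size T) A) eT.
have szB : (0 < size B)%N by rewrite size_drop; lia.
move: E; rewrite eA -catA => /(congr1 (drop (size T))).
rewrite !drop_size_cat // => EB.
have pB : prefix w (B ++ w).
  by rewrite -(prefix_long _ _ Z) ?size_cat ?leq_addl // -catA EB prefix_prefix.
move/prefixP: pB => [Z'' EZ].
move: HA; rewrite eA -catA EZ occ_L1.
case: B szB EZ {EB eA} => [//|x B] _ /= [_ <-].
have := occ_catge B w; rewrite occ_cons prefix_refl (occ_short v) //.
have := occ_catge T w; rewrite occ_cons prefix_refl (occ_short v) //.
lia.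
Qed.

Lemma prefix_shorten (s S Z : seq 'I_b) : prefix s (S ++ Z) -> (size s <= size S)%N ->
  prefix s S.
Proof. by move=> H Hs; rewrite -(prefix_long _ _ Z). Qed.

End Comb.

Local Open Scope classical_set_scope.
Local Open Scope ring_scope.

Section Tools.
Variable R : realType.
Local Open Scope ereal_scope.

Lemma esumZl (T : choiceType) (S : set T) (a : T -> \bar R) (r : R) :
  (0 <= r)%R -> (forall x, 0 <= a x) ->
  \esum_(x in S) (r%:E * a x) = r%:E * \esum_(x in S) a x.
Proof.
move=> r0 a0.
have key A : fsets S A -> \sum_(x \in A) (r%:E * a x) = r%:E * \sum_(x \in A) a x.
  by move=> [finA AS]; rewrite !fsbig_finite // ge0_sume_distrr.
rewrite /esum -ereal_supZl //; last first.
  by apply/set0P; exists 0; exists set0; [exact: fsets_set0|rewrite fsbig_set0].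
congr ereal_sup; apply/seteqP; split => y /=.
  move=> [A HA <-]; exists (\sum_(x \in A) a x); first by exists A.
  by rewrite key.
by move=> [z [A HA <-] <-]; exists A => //; rewrite key.
Qed.

Lemma esum_subset (T : choiceType) (S S' : set T) (a : T -> \bar R) :
  S `<=` S' -> \esum_(x in S) a x <= \esum_(x in S') a x.
Proof.
move=> SS; rewrite /esum; apply: ge_ereal_sup => _ [A [finA AS] <-].
apply: ereal_sup_ubound; exists A => //; split => //; exact: subset_trans AS SS.
Qed.

Lemma esum_fin (T : finType) (P : pred T) (c : R) : (0 <= c)%R ->
  \esum_(x in [set x | P x]) c%:E = (#|P|%:R * c)%:E.
Proof.
move=> c0; rewrite esum_fset //; last exact: finite_finset.
rewrite (fsbigE (enum P)) //=; last 3 first.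
- exact: enum_uniq.
- by move=> x /=; rewrite mem_enum.
- by move=> i /= Pi; rewrite mem_enum /in_mem /= Pi.
rewrite big_seq_cond (eq_bigl (fun i => i \in enum P)); last first.
  by move=> i; rewrite mem_enum mem_setE /in_mem /= andbb.
rewrite big_enum_cond sumEFin (eq_bigl [in P]) ?sumr_const ?mulr_natl //.
by move=> i; rewrite mem_enum /in_mem /= andbb.
Qed.

End Tools.

Section Main.
Variables (R : realType) (b : nat) (hb : (2 <= b)%N) (d1 : 'I_b) (v : seq 'I_b).
Local Notation w := (d1 :: v).
Local Notation occ := (occurrences w).

Definition wt (n : nat) : R := ((b%:R : R) ^+ n)^-1.

Lemma wt_gt0 n : 0 < wt n.
Proof. by rewrite /wt invr_gt0 exprn_gt0 // ltr0n; lia. Qed.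

Lemma wt_ge0 n : 0 <= wt n.
Proof. exact: ltW (wt_gt0 n). Qed.

Lemma wtD m n : wt (m + n) = wt m * wt n.
Proof. by rewrite /wt exprD invfM. Qed.

Local Open Scope ereal_scope.

Definition mass (S : set (seq 'I_b)) := \esum_(X in S) (wt (size X))%:E.

Lemma mass_ge0 S : 0 <= mass S.
Proof. by apply: esum_ge0 => X _; rewrite lee_fin wt_ge0. Qed.

Lemma slice (P : pred (seq 'I_b)) l :
  mass [set X | P X /\ size X = l] =
  ((#|[set t : l.-tuple 'I_b | P t]%SET|)%:R * wt l)%:E.
Proof.
rewrite /mass (eq_esum (b := fun _ => (wt l)%:E)); last by move=> X [_ ->].
rewrite (reindex_esum [set t : l.-tuple 'I_b | P t] _ (fun t => val t)).
  rewrite esum_fin ?wt_ge0 //; congr (_%:R * _)%:E.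
  by apply: eq_card => t; rewrite inE.
split.
- by move=> t /= Pt; split => //; exact: size_tuple.
- by move=> t t' _ _; exact: val_inj.
- move=> X /= [PX sz]; exists (Tuple (introT eqP sz)) => //.
Qed.

Definition AK k := [set X : seq 'I_b | prefix v X /\ occ X = k].

Lemma series_mass k :
  \sum_(l <oo) (((Zcoef w v k l)%:R / ((b%:R : R) ^+ l))%R)%:E = mass (AK k).
Proof.
have -> : AK k = \bigcup_l [set X | (prefix v X && (occ X == k)) /\ size X = l].
  apply/seteqP; split => X /=.
    by move=> [HP Ho]; exists (size X) => //; split => //; rewrite HP Ho eqxx.
  by move=> [l _ [/andP [HP /eqP Ho] _]].
rewrite /mass nneseries_sum_bigcup //; last first.
- by move=> X; rewrite lee_fin wt_ge0.
- by move=> i j _ _ [X [[_ <-] [_ <-]]].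
apply: eq_eseriesr => l _; rewrite -/(mass _) slice.
by [].
Qed.


Definition Fp := [set A : seq 'I_b | prefix v (A ++ w) /\ occ (A ++ w) = 1%N].
Definition Phi := \esum_(A in Fp) (wt (size A).+1)%:E.

Lemma Phi_ge0 : 0 <= Phi.
Proof. by apply: esum_ge0 => X _; rewrite lee_fin wt_ge0. Qed.

Lemma cat_eq_size (A A' Y Y' : seq 'I_b) : size A = size A' ->
  A ++ Y = A' ++ Y' -> A = A' /\ Y = Y'.
Proof. by move=> sz /eqP; rewrite eqseq_cat // => /andP [/eqP -> /eqP ->]. Qed.

Lemma step_bij k : set_bij (Fp `*`` (fun=> AK k)) (AK k.+1)
  (fun z => z.1 ++ d1 :: z.2).
Proof.
split.
- move=> [A Y] [/= [HA1 HA2] [HY1 HY2]] /=.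
  move/prefixP: HY1 => [Z EY]; subst Y.
  have E : A ++ d1 :: v ++ Z = (A ++ w) ++ Z by rewrite -catA.
  split; first by rewrite E prefix_catl.
  by have := @occ_L1 b d1 v A Z; rewrite /= HA2 HY2 => ->.
- move=> [A Y] [A' Y'] /set_mem [/= [_ HA] [HY _]] /set_mem [/= [_ HA'] [HY' _]] /= E.
  move/prefixP: HY => [Z EY]; move/prefixP: HY' => [Z' EY']; subst Y Y'.
  have s1 := @occ_uniq b d1 v _ _ _ _ HA E; have s2 := @occ_uniq b d1 v _ _ _ _ HA' (esym E).
  have [-> EE] := cat_eq_size _ _ _ _ (anti_leq (introT andP (conj s1 s2))) E.
  by case: EE => ->.
- move=> X [HX1 HX2].
  have := @occ_decomp b d1 v X; rewrite HX2 => /(_ isT) [A [Z [EX HA]]].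
  exists (A, v ++ Z); last by rewrite EX.
  split => /=.
    split => //; apply: (@prefix_shorten b _ _ Z); first by rewrite -catA -EX.
    by rewrite size_cat /=; lia.
  split; first exact: prefix_prefix.
  by move: HX2; rewrite EX (@occ_L1 b d1 v) HA => -[].
Qed.

Lemma mass_step k r : mass (AK k) = r%:E -> mass (AK k.+1) = Phi * r%:E.
Proof.
move=> Hr.
have r0 : (0 <= r)%R by rewrite -lee_fin -Hr mass_ge0.
rewrite /mass (reindex_esum _ _ _ _ (step_bij k)) /=.
rewrite -(@esum_esum _ _ _ Fp (fun=> AK k) (fun A Y => (wt (size (A ++ d1 :: Y)))%:E)); last first.
  by move=> i j _ _; rewrite lee_fin wt_ge0.
under eq_esum => A _.
  under eq_esum => Y _ do rewrite size_cat /= -addSnnS wtD EFinM.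
  rewrite esumZl ?wt_ge0 //; last by move=> Y; rewrite lee_fin wt_ge0.
  rewrite -/(mass _) Hr muleC.
  over.
rewrite esumZl //; last by move=> A; rewrite lee_fin wt_ge0.
by rewrite muleC.
Qed.

Lemma rcons_catE (Y : seq 'I_b) c : rcons Y c = Y ++ [:: c].
Proof. by rewrite cats1. Qed.

Lemma Phi_one r : mass (AK 0) = r%:E -> Phi = 1.
Proof.
move=> Hr.
set P2 := AK 0 `*`` (fun=> [set c : 'I_b | xpredT c]).
set g := fun z : seq 'I_b * 'I_b => rcons z.1 z.2.
set I := g @` P2.
have Ha : mass (AK 0) = mass I.
  rewrite /mass esum_image; last first.
    by move=> [X c] [X' c'] _ _ /= /rcons_inj.
  rewrite -(@esum_esum _ _ _ (AK 0) (fun=> [set c : 'I_b | xpredT c])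
             (fun X c => (wt (size (rcons X c)))%:E)); last first.
    by move=> i j _ _; rewrite lee_fin wt_ge0.
  apply: eq_esum => X _; under eq_esum do rewrite size_rcons.
  rewrite esum_fin ?wt_ge0 //; congr EFin.
  rewrite (@eq_card _ _ 'I_b) ?card_ord // /wt exprS invfM mulrA divff ?mul1r //.
  by rewrite pnatr_eq0; lia.
have Hc : mass I = mass (AK 0 `&` ~` [set v]) + mass ((fun A => A ++ w) @` Fp).
  rewrite /mass (esumID (AK 0)); last by move=> X _; rewrite lee_fin wt_ge0.
  congr (_ + _); congr esum; apply/seteqP; split.
  - move=> X [[[Y c] [HY _] <-] HX]; split => //= E.
    have := congr1 size E; rewrite size_rcons; have := @prefix_size b _ _ HY.1; lia.
  - move=> X [HX Hv]; split => //.
    case/lastP: X HX Hv => [|Y c] HX Hv.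
      by exfalso; apply: Hv; move: HX.1; rewrite prefixs0 => /eqP ->.
    have sY : (size v <= size Y)%N.
      rewrite leqNgt; apply/negP => H; apply: Hv => /=.
      have := @prefix_size b _ _ HX.1; rewrite size_rcons => H2.
      have szE : size v = size (rcons Y c) by rewrite size_rcons; apply/eqP; rewrite eqn_leq H2 H.
      by move: HX.1; rewrite prefixE szE take_size => /eqP.
    exists (Y, c) => //; split => //; split.
      by apply: (@prefix_shorten b _ _ [:: c]); rewrite -?rcons_catE; [exact: HX.1|].
    by have := @occ_catl b d1 v Y [:: c]; rewrite -rcons_catE HX.2 leqn0 => /eqP.
  - move=> X [[[Y c] [HY _] <-] HX].
    have pv : prefix v (rcons Y c) by rewrite rcons_catE prefix_catl // HY.1.
    have : (0 < occ (rcons Y c))%N.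
      by rewrite lt0n; apply/negP => /eqP H0; apply: HX.
    move=> /(@occ_decomp b d1 v) [A [Z [E HA]]].
    case/lastP: Z E => [|Z z] E.
      exists A; last by rewrite /g /= E cats0.
      by split => //; move: pv; rewrite E cats0.
    exfalso; move: E; rewrite -rcons_cat -rcons_cat => /rcons_inj [EY _].
    have := @occ_catl b d1 v (A ++ w) Z; rewrite -catA -EY HY.2 HA; lia.
  - move=> X [A [HA1 HA2] <-]; split; last first.
      by move=> [_ H0]; rewrite HA2 in H0.
    have Ew : A ++ w = rcons (A ++ belast d1 v) (last d1 v).
      by rewrite rcons_cat -lastI.
    exists (A ++ belast d1 v, last d1 v); last by rewrite /g /= -Ew.
    split => //; split.
      apply: (@prefix_shorten b _ _ [:: last d1 v]).
        by rewrite -rcons_catE -Ew.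
      by rewrite size_cat size_belast; lia.
    apply/eqP; apply: contraT; rewrite -lt0n => /(@occ_decomp b d1 v) [A' [Z' [/= E' _]]].
    have E2 : A ++ w ++ [::] = A' ++ w ++ rcons Z' (last d1 v).
      by rewrite cats0 Ew E' -!rcons_cat.
    have s1 := @occ_uniq b d1 v _ _ _ _ HA2 E2.
    have := congr1 size E'; rewrite !size_cat size_belast /= size_cat => H; move: H s1; move: (size A) (size A') (size v) (size Z') => x y z t; lia.
have Hd : mass (AK 0) = (wt (size v))%:E + mass (AK 0 `&` ~` [set v]).
  rewrite /mass (esumID [set v]); last by move=> X _; rewrite lee_fin wt_ge0.
  congr (_ + _).
  have -> : AK 0 `&` [set v] = [set v].
    apply/seteqP; split => X; first by move=> [].
    move=> /= ->; split => //; split; first exact: prefix_refl.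
    by rewrite (@occ_short b d1 v).
  by rewrite esum_set1 // lee_fin wt_ge0.
have He : mass ((fun A => A ++ w) @` Fp) = (wt (size v))%:E * Phi.
  rewrite /mass esum_image; last first.
    move=> A A' _ _ /= E; apply: (cat_eq_size _ _ _ _ _ E).1.
    by move/(congr1 size): E; rewrite !size_cat => /eqP; rewrite eqn_add2r => /eqP.
  rewrite /Phi -esumZl ?wt_ge0 //; last by move=> A; rewrite lee_fin wt_ge0.
  apply: eq_esum => A _; rewrite size_cat /= -EFinM -wtD; congr (wt _)%:E; lia.
have Mge0 := mass_ge0 (AK 0 `&` ~` [set v]).
have Mfin : mass (AK 0 `&` ~` [set v]) \is a fin_num.
  rewrite ge0_fin_numE //; apply: (@le_lt_trans _ _ (mass (AK 0))).
    by rewrite Hd leeDr // lee_fin wt_ge0.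
  by rewrite Hr ltry.
move: Hd; rewrite Ha Hc addeC => /(congr1 (fun x => x - mass (AK 0 `&` ~` [set v]))).
rewrite !addeK // He => E.
have wpos := wt_gt0 (size v).
have Pge0 := Phi_ge0.
move: E Pge0; case: Phi => [y| |] //.
- move=> /eqP; rewrite -EFinM eqe -subr_eq0 -{2}(mulr1 (wt _)) -mulrBr mulf_eq0.
  by rewrite gt_eqF //= subr_eq0 => /eqP ->.
- by move=> E _; move: E; rewrite gt0_muley // lte_fin.
Qed.

End Main.

Section Geo.
Variable R : realType.

Lemma psum_mono (u : nat -> R) N N' : (forall l, 0 <= u l) -> (N <= N')%N ->
  \sum_(0 <= i < N) u i <= \sum_(0 <= i < N') u i.
Proof.
move=> u0 H; rewrite [X in _ <= X](big_cat_nat (n := N)) //= lerDl.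
by apply: sumr_ge0 => i _.
Qed.

Lemma geo (u : nat -> R) (p : nat) (K : R) : (forall l, 0 <= u l) -> 0 <= K -> K < 1 ->
  (forall l, (p <= l)%N -> u (l + p)%N <= K * u l) -> cvgn (series u).
Proof.
move=> u0 K0 K1 H.
set S := fun N => \sum_(0 <= i < N) u i.
have key N : S N <= S (p + p)%N + K * S N.
  case: (leqP N (p + p)) => HN.
    rewrite /S; apply: (le_trans (psum_mono _ _ _ u0 HN)).
    by rewrite lerDl mulr_ge0 // sumr_ge0.
  have [M ->] : exists M, N = (p + p + M)%N by exists (N - (p + p))%N; lia.
  have E1 : S (p + p + M)%N = S (p + p)%N + \sum_(0 <= i < M) u (i + (p + p))%N.
    rewrite /S (big_cat_nat (n := (p + p)%N)) ?leq_addr //=.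
    by rewrite -{2}[(p + p)%N]add0n big_addn addKn.
  have E2 : \sum_(0 <= i < M) u (i + p)%N <= S (p + p + M)%N.
    have E3 : \sum_(0 <= i < M) u (i + p)%N <= \sum_(0 <= i < M + p) u i.
      rewrite [X in _ <= X](big_cat_nat (n := p)) ?leq_addl //=.
    by rewrite (big_addn 0 _ p) addnK lerDr sumr_ge0.
    apply: le_trans E3 _; apply: psum_mono => //; lia.
  rewrite [X in X <= _]E1 lerD2l.
  apply: (@le_trans _ _ (\sum_(0 <= i < M) K * u (i + p)%N)).
    by apply: ler_sum => i _; rewrite addnA; apply: H; apply: leq_addl.
  by rewrite -mulr_sumr ler_wpM2l.
apply: nondecreasing_is_cvgn.
  by move=> m n mn; rewrite /series /=; apply: psum_mono.
exists (S (p + p)%N / (1 - K)) => _ [N _ <-].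
rewrite /series /= -/(S N) ler_pdivlMr ?subr_gt0 //.
by rewrite mulrBr mulr1 lerBlDr [S N * K]mulrC; exact: key.
Qed.

Lemma nneseries_lim (u : nat -> R) : cvgn (series u) ->
  (\sum_(l <oo) (u l)%:E)%E = (limn (series u))%:E.
Proof.
move=> cu; rewrite -EFin_lim //; congr (limn _); apply/funext => n /=.
by rewrite /series /= sumEFin.
Qed.

End Geo.

Section Final.
Variables (R : realType) (b : nat) (hb : (2 <= b)%N) (d1 : 'I_b) (v : seq 'I_b).
Local Notation w := (d1 :: v).
Local Notation occ := (occurrences w).
Local Notation wt := (@wt R b).
Local Notation mass := (@mass R b).

Definition ak k l : R := (Zcoef w v k l)%:R / ((b%:R : R) ^+ l).

Lemma ak_ge0 k l : 0 <= ak k l.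
Proof. by rewrite /ak divr_ge0 // exprn_ge0. Qed.

Lemma wt_le1 n : wt n <= 1.
Proof.
rewrite /wt invf_le1 ?exprn_gt0 ?ltr0n //; last lia.
by rewrite exprn_ege1 // ler1n; lia.
Qed.

Lemma decay l : (size v <= l)%N ->
  ak 0 (l + (size v).+1)%N <= (1 - wt (size v).+1) * ak 0 l.
Proof.
move=> Hl.
set p := (size v).+1.
set S0 := fun n => [set X : seq 'I_b | (prefix v X && (occ X == 0%N)) /\ size X = n].
have mS n : mass (S0 n) = (ak 0 n)%:E by rewrite /S0 slice.
set Bs := [set B : seq 'I_b | (B != w) /\ size B = p].
have mB : mass Bs = (1 - wt p)%:E.
  rewrite /Bs slice //; apply: f_equal.
  have -> : [set t : p.-tuple 'I_b | val t != w]%SET = [set~ (in_tuple w)]%SET.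
    by apply/setP => t; rewrite !inE -val_eqE.
  rewrite cardsC1 card_tuple card_ord -subn1 natrB ?expn_gt0 ?(leq_trans _ hb) //.
  by rewrite mulrBl mul1r natrX /wt mulfV // expf_neq0 // pnatr_eq0; lia.
set Img := (fun z : seq 'I_b * seq 'I_b => z.1 ++ z.2) @` (S0 l `*`` fun=> Bs).
have sub : S0 (l + p)%N `<=` Img.
  move=> X [/andP [HX1 /eqP HX2] HX3].
  exists (take l X, drop l X); last by rewrite /= cat_take_drop.
  split => /=.
    split; last by rewrite size_takel // HX3 leq_addr.
    apply/andP; split.
      apply: (@prefix_shorten b _ _ (drop l X)); first by rewrite cat_take_drop.
      by rewrite size_takel // HX3 leq_addr.
    by have := @occ_catl b d1 v (take l X) (drop l X); rewrite cat_take_drop HX2 leqn0.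
  split; last by rewrite size_drop HX3 addKn.
  apply/eqP => E.
  have := @occ_catge b d1 v (take l X) (drop l X).
  rewrite cat_take_drop HX2 E occ_cons prefix_refl (@occ_short b d1 v v) //=.
  lia.
have mImg : mass Img = ((1 - wt p) * ak 0 l)%:E.
  rewrite /mass esum_image; last first.
    move=> [X B] [X' B'] /set_mem [[_ HX] _] /set_mem [[_ HX'] _] /= E; rewrite /= in HX HX'.
    by have [-> ->] := cat_eq_size _ _ _ _ _ (etrans HX (esym HX')) E.
  rewrite -(@esum_esum _ _ _ (S0 l) (fun=> Bs)
             (fun X B => (wt (size (X ++ B)))%:E)); last first.
    by move=> i j _ _; rewrite lee_fin wt_ge0.
  under eq_esum => X _.
    under eq_esum => B _ do rewrite size_cat wtD EFinM.
    rewrite esumZl ?wt_ge0 //; last by move=> B; rewrite lee_fin wt_ge0.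
    rewrite -/(mass _) mB muleC.
    over.
  rewrite esumZl ?subr_ge0 ?wt_le1 //; last by move=> X; rewrite lee_fin wt_ge0.
  by rewrite -/(mass _) mS EFinM.
have := @esum_subset R _ _ _ (fun X => (wt (size X))%:E) sub.
by rewrite -/(mass _) -/(mass _) mS mImg lee_fin.
Qed.

Theorem main_thm : exists M : R, forall k : nat,
  [series ak k l]_l @ \oo --> M.
Proof.
set p := (size v).+1.
have cv0 : cvgn (series (ak 0)).
  apply: (@geo R (ak 0) p (1 - wt p)).
  - exact: ak_ge0.
  - by rewrite subr_ge0 wt_le1.
  - by rewrite ltrBlDr ltrDl wt_gt0.
  - by move=> l Hl; apply: decay; apply: leq_trans Hl; rewrite /p.
set r := limn (series (ak 0)).
have Hr : mass (AK b d1 v 0) = r%:E.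
  by rewrite -series_mass // -nneseries_lim.
have Phi1 := @Phi_one R b hb d1 v _ Hr.
have Hk : forall k, mass (AK b d1 v k) = r%:E.
  by elim => // k IH; rewrite (@mass_step R b hb d1 v _ _ IH) Phi1 mul1e.
exists r => k.
have ck : cvgn (series (ak k)).
  apply: nnseries_is_cvg; first exact: ak_ge0.
  by have := @series_mass R b hb d1 v k; rewrite /ak => ->; rewrite Hk ltry.
have : (limn (series (ak k)))%:E = r%:E.
  by rewrite -nneseries_lim // (@series_mass R b hb d1 v k) Hk.
by move=> [E]; rewrite -E.
Qed.

End Final.

Theorem lemma4 (R : realType) (b : nat) (w : seq 'I_b) :
  (2 <= b)%N -> (1 <= size w)%N ->
  exists M : R, forall k : nat,
    [series (Zcoef w (behead w) k l)%:R / (b%:R ^+ l) : R]_l @ \oo --> M.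
Proof.
move=> hb; case: w => [//|d1 v] _.
exact: (@main_thm R b hb d1 v).
Qed.
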